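(* There exists a unital, completely positive, idempotent linear map $\Phi:\ell^\infty(\mathbb Z)\to\ell^\infty(\mathbb Z)$ which is $\mathbb Z$-equivariant (i.e. $\Phi\circ B=B\circ\Phi$, where $(Bv)_n=v_{n+1}$ is the backward shift) and whose range is not a C*-subalgebra of $\ell^\infty(\mathbb Z)$.
   Context: $\ell^\infty(\mathbb Z)$ is the C*-algebra of bounded complex sequences indexed by $\mathbb Z$ with pointwise operations; $\mathbb Z$ acts on it by translation, generated by the backward shift $B$. *)

(* Defs.v *)
From HB Require Import structures.
From mathcomp Require Import all_boot all_order all_algebra.
From mathcomp Require Import complex.
From mathcomp Require Import reals.
Set Implicit Arguments. Unset Strict Implicit. Unset Printing Implicit Defensive.
Import Order.TTheory GRing.Theory Num.Theory.
Local Open Scope ring_scope.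

Section Linf.
Variable R : realType.
Notation C := (R[i])%C.

Definition seqZ := int -> C.

Definition bounded (v : seqZ) : Prop := exists M : R, forall n, `|v n| <= (M%:C)%C.

Definition sadd (u v : seqZ) : seqZ := fun n => u n + v n.
Definition sscale (a : C) (v : seqZ) : seqZ := fun n => a * v n.
Definition smul (u v : seqZ) : seqZ := fun n => u n * v n.
Definition sstar (v : seqZ) : seqZ := fun n => conjc (v n).
Definition sone : seqZ := fun _ => 1.

Definition bshift (v : seqZ) : seqZ := fun n => v (n + 1).

Definition unif_cvg (w : nat -> seqZ) (v : seqZ) : Prop :=
  forall eps : R, 0 < eps -> exists K : nat, forall k, (K <= k)%N ->
    forall n, `|w k n - v n| <= (eps%:C)%C.

Definition is_Cstar_subalgebra (S : seqZ -> Prop) : Prop :=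
  (forall v, S v -> bounded v) /\
  S (fun _ => 0) /\
  (forall u v, S u -> S v -> S (sadd u v)) /\
  (forall a v, S v -> S (sscale a v)) /\
  (forall u v, S u -> S v -> S (smul u v)) /\
  (forall v, S v -> S (sstar v)) /\
  (forall w v, (forall k, S (w k)) -> bounded v -> unif_cvg w v -> S v).

Definition mx_positive (n : nat) (A : 'I_n -> 'I_n -> seqZ) : Prop :=
  exists B : 'I_n -> 'I_n -> seqZ,
    (forall i j, bounded (B i j)) /\
    forall i j k, A i j k = \sum_(l < n) (conjc (B l i k) * B l j k).

(* Hypotheses on a map Phi : l^oo(Z) -> l^oo(Z), encoded as a function on all
   sequences whose behaviour is only constrained on bounded ones. *)
Definition maps_linf (Phi : seqZ -> seqZ) : Prop :=
  forall v, bounded v -> bounded (Phi v).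

Definition is_linear_linf (Phi : seqZ -> seqZ) : Prop :=
  forall a u v, bounded u -> bounded v ->
    Phi (sadd (sscale a u) v) = sadd (sscale a (Phi u)) (Phi v).

Definition is_unital (Phi : seqZ -> seqZ) : Prop := Phi sone = sone.

Definition is_idempotent (Phi : seqZ -> seqZ) : Prop :=
  forall v, bounded v -> Phi (Phi v) = Phi v.

Definition is_completely_positive (Phi : seqZ -> seqZ) : Prop :=
  forall (n : nat) (A : 'I_n -> 'I_n -> seqZ),
    mx_positive A -> mx_positive (fun i j => Phi (A i j)).

Definition is_Z_equivariant (Phi : seqZ -> seqZ) : Prop :=
  forall v, bounded v -> Phi (bshift v) = bshift (Phi v).

Definition range_linf (Phi : seqZ -> seqZ) : seqZ -> Prop :=
  fun w => exists v, bounded v /\ w = Phi v.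

End Linf.

(* Main.v *)
Require Import Defs.
From mathcomp Require Import all_boot all_order all_algebra complex reals.
From HB Require Import structures.
From mathcomp Require Import spectral sesquilinear.
From mathcomp Require Import boolp classical_sets filter.
From mathcomp Require Import ring lra zify.
Set Implicit Arguments. Unset Strict Implicit. Unset Printing Implicit Defensive.
Import Order.TTheory GRing.Theory Num.Theory.
Local Open Scope classical_set_scope.
Local Open Scope ring_scope.

Definition isF (F : set (set int)) :=
  [/\ F setT, (forall A B, F A -> F B -> F (A `&` B)),
      (forall A B, A `<=` B -> F A -> F B) & ~ F set0].
Definition isUF (U : set (set int)) := isF U /\ forall A, U A \/ U (~` A).
Definition CL (F U : set (set int)) := isUF U /\ F `<=` U.
Definition usum (p q : set (set int)) : set (set int) :=
  [set A | p [set n | q [set m | A (n + m)]]].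

Lemma uf_ex (F : set (set int)) : isF F -> exists U, CL F U.
Proof.
case=> FT FI FS F0.
have PF : ProperFilter F.
  apply: Build_ProperFilter_ex.
    move=> A FA; apply: contrapT => nA; apply: F0; apply: FS FA.
    by move=> x Ax; apply: nA; exists x.
  by split => // A B AB; exact: FS.
have [G [UG FG]] := ultraFilterLemma PF.
exists G; split=> //; split; last by move=> A; exact: in_ultra_setVsetC.
split.
- exact: filterT.
- by move=> A B; exact: filterI.
- by move=> A B AB; exact: filterS.
- by move=> G0; have [x []] := filter_ex G0.
Qed.

Section UF.
Variable U : set (set int).
Hypothesis hU : isUF U.
Lemma ufT : U setT. Proof. by case: hU => -[]. Qed.
Lemma ufI {A B} : U A -> U B -> U (A `&` B). Proof. by case: hU => -[_ ? _ _] _; auto. Qed.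
Lemma ufS {A B} : U A -> A `<=` B -> U B. Proof. move=> UA AB; case: hU => -[_ _ H _] _; exact: H AB UA. Qed.
Lemma uf0 : ~ U set0. Proof. by case: hU => -[]. Qed.
Lemma ufC A : U A \/ U (~` A). Proof. by case: hU. Qed.
Lemma ufN {A} : U A -> ~ U (~` A).
Proof. move=> UA UNA; apply: uf0; apply: (ufS (ufI UA UNA)) => x [] /= ? ?; contradiction. Qed.
Lemma ufNN {A} : ~ U A -> U (~` A).
Proof. by move=> nA; case: (ufC A). Qed.
Lemma uf_ex2 {A B} : U A -> U B -> exists x, A x /\ B x.
Proof.
move=> UA UB; apply: contrapT => nE; apply: uf0; apply: (ufS (ufI UA UB)).
by move=> x [Ax Bx]; apply: nE; exists x.
Qed.
End UF.
Arguments ufT {U}. Arguments ufI {U} hU {A B}. Arguments ufS {U} hU {A B}.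
Arguments uf0 {U}. Arguments ufC {U}. Arguments ufN {U} hU {A}. Arguments ufNN {U} hU {A}.
Arguments uf_ex2 {U} hU {A B}.

Lemma uf_eq p q : isUF p -> isUF q -> p `<=` q -> p = q.
Proof.
move=> hp hq pq; apply/funext => A; apply/propext; split; first exact: pq.
move=> qA; case: (ufC hp A) => // pNA.
by have := ufN hq qA (pq _ pNA).
Qed.

Lemma usum_UF p q : isUF p -> isUF q -> isUF (usum p q).
Proof.
move=> hp hq; split; first split.
- by apply: (ufS hp (ufT hp)) => n _; exact: ufT.
- move=> A B pA pB; apply: (ufS hp (ufI hp pA pB)) => n [qA qB].
  by apply: (ufS hq (ufI hq qA qB)) => m [].
- move=> A B AB pA; apply: (ufS hp pA) => n qA; apply: (ufS hq qA) => m; exact: AB.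
- move=> p0; apply: (uf0 hp); apply: (ufS hp p0) => n; exact: (uf0 hq).
- move=> A; case: (ufC hp [set n | q [set m | A (n + m)]]) => pA; [left|right] => //.
  apply: (ufS hp pA) => n /= nq; exact: ufNN.
Qed.

Lemma usumA p q r : usum (usum p q) r = usum p (usum q r).
Proof.
rewrite /usum; apply/funext => A /=; congr p; apply/funext => n /=; congr q.
by apply/funext => m /=; congr r; apply/funext => k /=; rewrite addrA.
Qed.

(* surjectivity of y |-> y + x onto the closure *)
Lemma usum_surj (F : set (set int)) x z : isF F -> isUF x -> isUF z ->
  (forall A, (forall y, CL F y -> usum y x A) -> z A) ->
  exists y, CL F y /\ usum y x = z.
Proof.
move=> hF hx hz Gz.
pose H := [set B | exists X A, [/\ F X, z A & X `&` [set n | x [set m | A (n + m)]] `<=` B]].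
have hH : isF H.
  case: hF => FT FI FS F0; split.
  - by exists setT, setT; split => //; exact: ufT.
  - move=> B1 B2 [X1 [A1 [F1 z1 s1]]] [X2 [A2 [F2 z2 s2]]].
    exists (X1 `&` X2), (A1 `&` A2); split; [exact: FI|exact: ufI|].
    move=> n [[n1 n2] /= nA]; split; [apply: s1|apply: s2]; split => //=;
      apply: (ufS hx nA) => m []//.
  - move=> B1 B2 sB [X [A [FX zA s]]]; exists X, A; split => //; exact: subset_trans sB.
  - move=> [X [A [FX zA s]]].
    have hNA : z (~` A) ; last exact: (ufN hz zA hNA).
    apply: Gz => y [hy Fy]; rewrite /usum.
    apply: (ufS hy (Fy _ FX)) => n Xn; apply: (ufNN hx) => xA.
    by have /s : (X `&` [set n | x [set m | A (n + m)]]) n by split.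
have [y [hy Hy]] := uf_ex hH.
exists y; split.
  split; [by []|].
  move=> X FX; apply: Hy; exists X, setT; split => //; first exact: ufT.
suff zs : z `<=` usum y x.
  have e := uf_eq hz (usum_UF hy hx) zs.
  by rewrite e.
move=> A zA; apply: Hy; exists setT, A; split => //; first by case: hF.
Qed.

Definition PiQ (Q : set (set int) -> set (set int) -> Prop) (F : set (set int)) :=
  forall x y, Q F x -> CL F y -> F `<=` usum x y.

Lemma maxF (Q : set (set int) -> set (set int) -> Prop) F0 :
  (forall F G x, F `<=` G -> Q G x -> Q F x) ->
  isF F0 -> PiQ Q F0 ->
  exists F, [/\ isF F, PiQ Q F, F0 `<=` F &
     forall G, isF G -> PiQ Q G -> F `<=` G -> G `<=` F].
Proof.
move=> Qa hF0 PF0.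
pose good G := isF G /\ PiQ Q G /\ F0 `<=` G.
pose P := [set G | G = set0 \/ good G].
have nz G : P G -> G setT -> good G.
  by case=> // ->.
have [|Am [PAm Amax]] := @Zorn_bigcup _ P.
  move=> C CP Ctot.
  have [[G0 CG0 gG0]|nog] := pselect (exists2 G, C G & good G); last first.
    left; apply/seteqP; split => // A [G CG GA].
    case: (CP _ CG) => [Ge|gG]; first by rewrite Ge in GA.
    by exfalso; apply: nog; exists G.
  have memg G A : C G -> G A -> good G.
    move=> CG GA; case: (CP _ CG) => // Ge; by rewrite Ge in GA.
  right; split; [split|split].
  - by exists G0 => //; case: gG0 => -[].
  - move=> A B [G1 C1 A1] [G2 C2 B2].
    have [g1 g2] := (memg _ _ C1 A1, memg _ _ C2 B2).
    case: (Ctot _ _ C1 C2) => s12.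
    + exists G2 => //; case: g2 => -[_ I _ _] _; apply: I => //; exact: s12.
    + exists G1 => //; case: g1 => -[_ I _ _] _; apply: I => //; exact: s12.
  - move=> A B AB [G CG GA]; exists G => //.
    by case: (memg _ _ CG GA) => -[_ _ S _] _; exact: S AB GA.
  - by move=> [G CG G0']; case: (memg _ _ CG G0') => -[].
  - move=> x y Qx [hy Uy] A [G CG GA].
    have [_ [PG _]] := memg _ _ CG GA.
    apply: (PG x y) => //.
      by apply: (Qa _ _ _ _ Qx) => B GB; exists G.
    split => // B GB; apply: Uy; by exists G.
  - by move=> A F0A; exists G0 => //; case: gG0 => _ [_]; apply.
have gAm : good Am.
  case: PAm => // Am0; exfalso.
  apply: (Amax F0); last by rewrite /P /=; right; split => //; split.
  rewrite Am0; split => // h; case: hF0 => FT _ _ _; by case: (h _ FT).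
case: gAm => hAm [PAm' FAm]; exists Am; split => // G hG PG AG.
apply: contrapT => nGA; apply: (Amax G); last first.
  by rewrite /P /=; right; split => //; split => //; exact: subset_trans FAm AG.
by split.
Qed.

Lemma CL_anti F G x : F `<=` G -> CL G x -> CL F x.
Proof. by move=> FG [hx Gx]; split => // A FA; apply: Gx; apply: FG. Qed.


Lemma sg_CL F x y : PiQ CL F -> CL F x -> CL F y -> CL F (usum x y).
Proof.
move=> PF Cx Cy; split; last exact: PF.
by apply: usum_UF; [case: Cx|case: Cy].
Qed.

Lemma ellis F0 : isF F0 -> PiQ CL F0 -> exists e, CL F0 e /\ usum e e = e.
Proof.
move=> hF0 P0.
have [F [hF PF F0F Fmax]] := maxF (@CL_anti) hF0 P0.
have [x Cx] := uf_ex hF.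
have hx : isUF x by case: Cx.
pose G := [set A | forall y, CL F y -> usum y x A].
have hG : isF G.
  have [y0 Cy0] := uf_ex hF.
  have u0 := usum_UF (proj1 Cy0) hx.
  split.
  - by move=> y [hy _]; exact: (ufT (usum_UF hy hx)).
  - by move=> A B GA GB y Cy; exact: (ufI (usum_UF (proj1 Cy) hx) (GA _ Cy) (GB _ Cy)).
  - by move=> A B AB GA y Cy; exact: (ufS (usum_UF (proj1 Cy) hx) (GA _ Cy) AB).
  - by move=> G0; exact: (uf0 u0 (G0 _ Cy0)).
have FG : F `<=` G by move=> A FA y Cy; have [_] := sg_CL PF Cy Cx; apply.
have PG : PiQ CL G.
  move=> z1 z2 [hz1 Gz1] [hz2 Gz2].
  have [y1 [Cy1 e1]] := usum_surj hF hx hz1 Gz1.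
  have [y2 [Cy2 e2]] := usum_surj hF hx hz2 Gz2.
  move=> A GA; rewrite -e1 -e2 -usumA.
  apply: GA; apply: sg_CL => //; exact: sg_CL.
have GF := Fmax G hG PG FG.
have [y0 [Cy0 e0]] : exists y, CL F y /\ usum y x = x.
  apply: (usum_surj hF hx hx) => A GA; case: Cx => _ Fx; apply: Fx; exact: GF.
pose H := [set B | exists X A, [/\ F X, x A & X `&` [set n | x [set m | A (n + m)]] `<=` B]].
have xT : forall n, x [set m | setT (n + m)] by move=> n; exact: (ufT hx).
have FH : F `<=` H.
  by move=> X FX; exists X, setT; split => //; exact: ufT.
have Hy0 : H `<=` y0.
  move=> B [X [A [FX xA s]]]; case: Cy0 => hy0 Fy0.
  apply: (ufS hy0 _ s); apply: (ufI hy0 (Fy0 _ FX)).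
  by move: xA; rewrite -{1}e0.
have hH : isF H.
  split.
  - by apply: FH; case: hF.
  - move=> B1 B2 [X1 [A1 [F1 x1 s1]]] [X2 [A2 [F2 x2 s2]]].
    exists (X1 `&` X2), (A1 `&` A2); split; [by case: hF => _ I _ _; exact: I|exact: ufI|].
    move=> n [[n1 n2] /= nA]; split; [apply: s1|apply: s2]; split => //=;
      apply: (ufS hx nA) => m []//.
  - move=> B1 B2 sB [X [A [FX zA s]]]; exists X, A; split => //; exact: subset_trans sB.
  - by move=> /Hy0; exact: (uf0 (proj1 Cy0)).
have PH : PiQ CL H.
  move=> z1 z2 [hz1 Hz1] [hz2 Hz2].
  have ez (zi : set (set int)) : isUF zi -> H `<=` zi -> usum zi x = x.
    move=> hzi Hzi; apply/esym/uf_eq => //; first exact: usum_UF.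
    by move=> A xA; apply: Hzi; exists setT, A; split => //; case: hF.
  move=> B [X [A [FX xA s]]].
  have h12 := usum_UF hz1 hz2.
  apply: (ufS h12 _ s); apply: (ufI h12).
    apply: (PF z1 z2); [split => //; exact: subset_trans FH Hz1|split => //; exact: subset_trans FH Hz2|exact: FX].
  have : usum (usum z1 z2) x A by rewrite usumA (ez z2) // (ez z1).
  by [].
have HF := Fmax H hH PH FH.
exists x; split; first exact: CL_anti F0F Cx.
apply/esym/uf_eq => //; first exact: usum_UF.
move=> A xA; case: Cx => _ Fx; apply: Fx; apply: HF.
exists setT, A; split => //; by case: hF.
Qed.

Lemma img_isF F x : isF F -> isUF x -> isF [set A | forall y, CL F y -> usum y x A].
Proof.
move=> hF hx; have [y0 Cy0] := uf_ex hF.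
have u0 := usum_UF (proj1 Cy0) hx.
split.
- by move=> y [hy _]; exact: (ufT (usum_UF hy hx)).
- by move=> A B GA GB y Cy; exact: (ufI (usum_UF (proj1 Cy) hx) (GA _ Cy) (GB _ Cy)).
- by move=> A B AB GA y Cy; exact: (ufS (usum_UF (proj1 Cy) hx) (GA _ Cy) AB).
- by move=> G0; exact: (uf0 u0 (G0 _ Cy0)).
Qed.

Definition join (F G : set (set int)) : set (set int) :=
  [set B | exists X Y, [/\ F X, G Y & X `&` Y `<=` B]].

Lemma join_isF F G : isF F -> isF G -> (exists z, CL F z /\ CL G z) -> isF (join F G).
Proof.
case=> FT FI FS F0 [GT GI GS G0] [z [[hz Fz] [_ Gz]]]; split.
- by exists setT, setT; split.
- move=> B1 B2 [X1 [Y1 [F1 G1 s1]]] [X2 [Y2 [F2 G2 s2]]].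
  exists (X1 `&` X2), (Y1 `&` Y2); split; [exact: FI|exact: GI|].
  by move=> n [[? ?] [? ?]]; split; [apply: s1|apply: s2].
- move=> B1 B2 sB [X [Y [FX GY s]]]; exists X, Y; split => //; exact: subset_trans sB.
- move=> [X [Y [FX GY s]]]; apply: (uf0 hz); apply: (ufS hz _ s).
  exact: (ufI hz (Fz _ FX) (Gz _ GY)).
Qed.

Lemma CL_join F G z : CL F z -> CL G z -> CL (join F G) z.
Proof.
move=> [hz Fz] [_ Gz]; split => // B [X [Y [FX GY s]]].
apply: (ufS hz _ s); exact: (ufI hz (Fz _ FX) (Gz _ GY)).
Qed.

Lemma CL_joinl F G z : isF G -> CL (join F G) z -> CL F z.
Proof. by case=> GT _ _ _ [hz Jz]; split => // X FX; apply: Jz; exists X, setT; split. Qed.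
Lemma CL_joinr F G z : isF F -> CL (join F G) z -> CL G z.
Proof. by case=> FT _ _ _ [hz Jz]; split => // X FX; apply: Jz; exists setT, X; split. Qed.

Definition Mk (k : nat) : set int := [set m | exists s : int, m = 2 ^+ k * s].
Definition Ab (b : nat) : set int :=
  [set n | exists (a : nat) (t : int), n = 2 ^+ (a.*2 + b) * (2 * t + 1)].
Definition FH : set (set int) := [set B | exists k, Mk k `<=` B].
Definition FA (b : nat) : set (set int) := [set B | exists k, Ab b `&` Mk k `<=` B].

Lemma Mk_mono k l : (k <= l)%N -> Mk l `<=` Mk k.
Proof.
move=> kl m [s ->]; exists (2 ^+ (l - k) * s).
by rewrite mulrA -exprD subnKC.
Qed.

Lemma Mk_add k n m : Mk k n -> Mk k m -> Mk k (n + m).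
Proof. by move=> [s ->] [t ->]; exists (s + t); rewrite mulrDr. Qed.

Lemma Mk0 k : Mk k 0. Proof. by exists 0; rewrite mulr0. Qed.

Lemma Ab_Mk b k : (Ab b `&` Mk k) (2 ^+ (k.*2 + b)).
Proof.
split; first by exists k, 0; rewrite mulr0 add0r mulr1.
exists (2 ^+ (k + b)); rewrite -exprD; congr (_ ^+ _).
by rewrite -addnn addnA.
Qed.

Lemma Ab_shift b n : Ab b n -> exists j, forall m, Mk j m -> Ab b (n + m).
Proof.
move=> [a [t ->]]; exists (a.*2 + b).+1 => m [s ->].
exists a, (t + s); rewrite exprS.
by rewrite mulrDr mulrDr mulrDl; ring.
Qed.

Lemma isF_FH : isF FH.
Proof.
split.
- by exists 0%N.
- move=> A B [k kA] [l lB]; exists (maxn k l) => m mm; split.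
    by apply: kA; apply: Mk_mono mm; exact: leq_maxl.
  by apply: lB; apply: Mk_mono mm; exact: leq_maxr.
- by move=> A B AB [k kA]; exists k; exact: subset_trans AB.
- by move=> [k k0]; exact: (k0 _ (Mk0 k)).
Qed.

Lemma isF_FA b : isF (FA b).
Proof.
split.
- by exists 0%N.
- move=> A B [k kA] [l lB]; exists (maxn k l) => m [am mm]; split.
    by apply: kA; split => //; apply: Mk_mono mm; exact: leq_maxl.
  by apply: lB; split => //; apply: Mk_mono mm; exact: leq_maxr.
- by move=> A B AB [k kA]; exists k; exact: subset_trans AB.
- by move=> [k k0]; exact: (k0 _ (Ab_Mk b k)).
Qed.

Lemma FH_FA b : FH `<=` FA b.
Proof. by move=> B [k kB]; exists k => m [_ ?]; exact: kB. Qed.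

Lemma FH_sg : PiQ CL FH.
Proof.
move=> x y [hx Hx] [hy Hy] B [k kB].
apply: (ufS hx (Hx _ (ex_intro _ k (fun _ h => h)))) => n nk.
apply: (ufS hy (Hy _ (ex_intro _ k (fun _ h => h)))) => m mk.
by apply: kB; exact: Mk_add.
Qed.

Lemma FA_rideal b x y : CL (FA b) x -> CL FH y -> FA b `<=` usum x y.
Proof.
move=> [hx Ax] [hy Hy] B [k kB].
apply: (ufS hx (Ax _ (ex_intro _ k (fun _ h => h)))) => n [nA nk].
have [j hj] := Ab_shift nA.
apply: (ufS hy (ufI hy (Hy _ (ex_intro _ j (fun _ h => h))) (Hy _ (ex_intro _ k (fun _ h => h))))).
move=> m [mj mk]; apply: kB; split; first exact: hj.
exact: Mk_add.
Qed.

Lemma v2_uniq (i j : nat) (t s : int) :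
  2 ^+ i * (2 * t + 1) = 2 ^+ j * (2 * s + 1) :> int -> i = j.
Proof.
wlog ij : i j t s / (i <= j)%N.
  move=> W e; case: (leqP i j) => h; first exact: W e.
  by apply/esym; apply: (W j i s t) => //; exact: ltnW.
move=> e; have : (2 * t + 1) = 2 ^+ (j - i) * (2 * s + 1) :> int.
  apply: (@mulfI _ (2 ^+ i)); first by rewrite expf_neq0.
  by rewrite e mulrA -exprD subnKC.
case: (j - i)%N (subnKC ij) => [|d] hd.
  by rewrite addn0 in hd.
rewrite exprS -mulrA; move: (2 ^+ d * (2 * s + 1)) => X e2.
lia.
Qed.

Lemma A01_disj n : Ab 0 n -> Ab 1 n -> False.
Proof.
move=> [a [t ->]] [c [s]] /v2_uniq; rewrite addn0 addn1.
move=> /(congr1 odd); by rewrite odd_double /= odd_double.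
Qed.

Definition QL (F x : set (set int)) := CL FH x.

Lemma left_absorb FL p q :
  (forall G, isF G -> PiQ QL G -> FL `<=` G -> G `<=` FL) -> PiQ QL FL -> FH `<=` FL ->
  CL FL p -> CL FL q -> usum p p = p -> usum q p = q.
Proof.
move=> Fmax PL HL Cp Cq pp.
have hp := proj1 Cp; have hq := proj1 Cq.
pose G := [set A | forall y, CL FH y -> usum y p A].
have hG : isF G := img_isF isF_FH hp.
have PG : PiQ QL G.
  move=> x z Cx [hz Gz].
  have [y [Cy e]] := usum_surj isF_FH hp hz Gz.
  move=> A GA; rewrite -e -usumA; apply: GA; exact: sg_CL FH_sg Cx Cy.
have LG : FL `<=` G.
  move=> A LA y Cy; have [_] : CL FL (usum y p).
    by split; [exact: usum_UF (proj1 Cy) hp | exact: PL].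
  by apply.
have GL := Fmax G hG PG LG.
have [y [Cy e]] : exists y, CL FH y /\ usum y p = q.
  apply: (usum_surj isF_FH hp hq) => A GA; case: Cq => _ Lq; apply: Lq; exact: GL.
by rewrite -e usumA pp.
Qed.

Theorem exists_pair : exists p q,
  [/\ isUF p, isUF q, p (Ab 0), q (Ab 1) &
      [/\ usum p p = p, usum q q = q, usum p q = p & usum q p = q]].
Proof.
have [FL [hL PL HL Lmax]] := @maxF QL FH (fun _ _ _ _ h => h) isF_FH FH_sg.
have CLH z : CL FL z -> CL FH z by exact: CL_anti.
have idem b : exists e, [/\ CL FL e, e (Ab b) & usum e e = e].
  have [c Cc] := uf_ex (isF_FA b).
  have [l Cl] := uf_ex hL.
  have hJ : isF (join FL (FA b)).
    apply: join_isF => //; first exact: isF_FA.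
    exists (usum c l); split.
      split; first exact: usum_UF (proj1 Cc) (proj1 Cl).
      by apply: PL => //; exact: CL_anti (@FH_FA b) Cc.
    split; first exact: usum_UF (proj1 Cc) (proj1 Cl).
    exact: FA_rideal Cc (CLH _ Cl).
  have PJ : PiQ CL (join FL (FA b)).
    move=> x y Cx Cy.
    have CxL := CL_joinl (isF_FA b) Cx; have CyL := CL_joinl (isF_FA b) Cy.
    have CxA := CL_joinr hL Cx.
    have [hxy _] := CL_join (sg_CL (fun x y Cx Cy => PL x y (CLH _ Cx) Cy) CxL CyL)
      (conj (usum_UF (proj1 Cx) (proj1 Cy)) (FA_rideal CxA (CLH _ CyL))).
    by case: (CL_join (sg_CL (fun x y Cx Cy => PL x y (CLH _ Cx) Cy) CxL CyL)
      (conj (usum_UF (proj1 Cx) (proj1 Cy)) (FA_rideal CxA (CLH _ CyL)))).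
  have [e [Ce ee]] := ellis hJ PJ.
  exists e; split => //; first exact: CL_joinl (isF_FA b) Ce.
  have [_ Ae] := CL_joinr hL Ce; apply: Ae.
  by exists 0%N => m [].
have [p [Cp Ap pp]] := idem 0%N.
have [q [Cq Aq qq]] := idem 1%N.
exists p, q; split => //; first exact: proj1 Cp; first exact: proj1 Cq.
split => //.
- exact: left_absorb Lmax PL HL Cq Cp qq.
- exact: left_absorb Lmax PL HL Cp Cq pp.
Qed.


Section Lim.
Variable R : realType.
Implicit Types (U : set (set int)) (g h : int -> R).

Definition rlim U g (a : R) := forall e : R, 0 < e -> U [set m | `|g m - a| < e].

Lemma rlim_uniq U g a b : isUF U -> rlim U g a -> rlim U g b -> a = b.
Proof.
move=> hU ga gb; apply: contrapT => nab.
have e0 : 0 < `|a - b| / 2 by rewrite divr_gt0 // normr_gt0 subr_eq0; apply/eqP.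
have [m [m1 m2]] := uf_ex2 hU (ga _ e0) (gb _ e0).
have : `|a - b| <= `|g m - a| + `|g m - b|.
  by rewrite -(normrN (g m - a)) (le_trans _ (ler_normD _ _)) // opprB addrA subrK.
move: m1 m2 => /= m1 m2; lra.
Qed.

Lemma rlim_ex U g M : isUF U -> (forall m, `|g m| <= M) -> exists a, rlim U g a.
Proof.
move=> hU gM.
pose S := [set x : R | U [set m | x <= g m]].
have SM : S (- M).
  apply: (ufS hU (ufT hU)) => m _ /=.
  by have := gM m; rewrite ler_norml => /andP[].
have Sub : ubound S M.
  move=> x Sx; rewrite leNgt; apply/negP => Mx.
  apply: (uf0 hU); apply: (ufS hU Sx) => m /= xm.
  have := gM m; rewrite ler_norml => /andP[_ gm]; lra.
have hS : has_sup S by split; [exists (- M) | exists M].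
exists (sup S) => e e0.
have e2 : 0 < e / 2 by rewrite divr_gt0.
have [x Sx xs] := sup_adherent e2 hS.
have nS : ~ S (sup S + e / 2).
  move=> /(sup_upper_bound hS) h; lra.
have := ufNN hU nS => hN.
apply: (ufS hU (ufI hU Sx hN)) => m [/= xm /negP]; rewrite -ltNge => gm.
rewrite ltr_norml; apply/andP; split; lra.
Qed.

Section Alg.
Context {U : set (set int)} (hU : isUF U).

Lemma rlim_cst c : rlim U (fun _ => c) c.
Proof. by move=> e e0; apply: (ufS hU (ufT hU)) => m _ /=; rewrite subrr normr0. Qed.

Lemma rlim_add g h a b : rlim U g a -> rlim U h b -> rlim U (fun m => g m + h m) (a + b).
Proof.
move=> ga hb e e0; have e2 : 0 < e / 2 by rewrite divr_gt0.
apply: (ufS hU (ufI hU (ga _ e2) (hb _ e2))) => m [/= m1 m2].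
have : `|g m + h m - (a + b)| <= `|g m - a| + `|h m - b|.
  by rewrite (le_trans _ (ler_normD _ _)) // addrACA opprD.
lra.
Qed.

Lemma rlim_opp g a : rlim U g a -> rlim U (fun m => - g m) (- a).
Proof. by move=> ga e e0; apply: (ufS hU (ga _ e0)) => m /=; rewrite -opprD normrN. Qed.

Lemma rlim_mul g h a b : rlim U g a -> rlim U h b -> rlim U (fun m => g m * h m) (a * b).
Proof.
move=> ga hb e e0.
pose d := e / 2 / (`|a| + `|b| + 1).
have s0 : 0 < `|a| + `|b| + 1 by have := normr_ge0 a; have := normr_ge0 b; lra.
have d0 : 0 < d by rewrite !divr_gt0.
have ed : d * (`|a| + `|b| + 1) = e / 2 by rewrite /d divfK // gt_eqF.
apply: (ufS hU (ufI hU (ufI hU (ga _ ltr01) (ga _ d0)) (hb _ d0))) => m [[/= m1 m2] m3].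
have tri : `|g m * h m - a * b| <= `|g m| * `|h m - b| + `|b| * `|g m - a|.
  have -> : g m * h m - a * b = g m * (h m - b) + b * (g m - a) by ring.
  by rewrite (le_trans (ler_normD _ _)) // !normrM.
have ga1 : `|g m| <= `|a| + `|g m - a|.
  by rewrite (le_trans _ (ler_normD _ _)) // addrC subrK.
have p1 : `|g m| * `|h m - b| <= (`|a| + 1) * d.
  apply: ler_pM => //; first lra; lra.
have p2 : `|b| * `|g m - a| <= `|b| * d by apply: ler_pM => //; lra.
have hb0 := normr_ge0 b.
move: tri p1 p2 ed; move: (`|g m * h m - a * b|) (`|g m| * `|h m - b|) (`|b| * `|g m - a|) => X P1 P2.
lra.
Qed.

Lemma rlim_bound g a M : rlim U g a -> (forall m, `|g m| <= M) -> `|a| <= M.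
Proof.
move=> ga gM; rewrite leNgt; apply/negP => aM.
have e0 : 0 < `|a| - M by rewrite subr_gt0.
have [m [m1 _]] := uf_ex2 hU (ga _ e0) (ufT hU).
move: m1 => /= m1; have := gM m.
have : `|a| <= `|g m| + `|g m - a|.
  by rewrite -(normrN (g m - a)) (le_trans _ (ler_normD _ _)) // opprB addrC subrK.
lra.
Qed.

Lemma rlim_set g (A : set int) c : U A -> (forall m, A m -> g m = c) -> rlim U g c.
Proof. by move=> UA gA e e0; apply: (ufS hU UA) => m /gA /= ->; rewrite subrr normr0. Qed.

End Alg.

Lemma rlim_comp p q g h a : isUF p -> isUF q ->
  (forall n, rlim q (fun m => g (n + m)) (h n)) -> rlim p h a -> rlim (usum p q) g a.
Proof.
move=> hp hq gh ha e e0; have e2 : 0 < e / 2 by rewrite divr_gt0.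
apply: (ufS hp (ha _ e2)) => n /= n1.
apply: (ufS hq (gh n _ e2)) => m /= m1.
have : `|g (n + m) - a| <= `|g (n + m) - h n| + `|h n - a|.
  by rewrite (le_trans _ (ler_normD _ _)) // addrA subrK.
lra.
Qed.
End Lim.

Section Cx.
Variable R : realType.
Local Notation C := (R[i])%C.
Implicit Types (U : set (set int)) (f g : int -> C).

Lemma cReD (x y : C) : complex.Re (x + y) = complex.Re x + complex.Re y. Proof. by case: x; case: y. Qed.
Lemma cImD (x y : C) : complex.Im (x + y) = complex.Im x + complex.Im y. Proof. by case: x; case: y. Qed.
Lemma cReM (x y : C) : complex.Re (x * y) = complex.Re x * complex.Re y - complex.Im x * complex.Im y. Proof. by case: x => a b; case: y. Qed.
Lemma cImM (x y : C) : complex.Im (x * y) = complex.Re x * complex.Im y + complex.Im x * complex.Re y. Proof. by case: x => a b; case: y. Qed.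
Lemma cReJ (x : C) : complex.Re (conjc x) = complex.Re x. Proof. by case: x. Qed.
Lemma cImJ (x : C) : complex.Im (conjc x) = - complex.Im x. Proof. by case: x. Qed.

Lemma normC_ReIm (x : C) M : `|x| <= (M%:C)%C -> `|complex.Re x| <= M /\ `|complex.Im x| <= M.
Proof.
rewrite normc_def lecR => h; split; apply: le_trans h;
  rewrite -sqrtr_sqr ler_wsqrtr //; [rewrite lerDl|rewrite lerDr]; exact: sqr_ge0.
Qed.

Lemma normC_le (x : C) M : `|complex.Re x| <= M -> `|complex.Im x| <= M -> `|x| <= ((M + M)%:C)%C.
Proof.
move=> hr hi; rewrite normc_def lecR.
have M0 : 0 <= M by exact: le_trans (normr_ge0 _) hr.
rewrite -(ger0_norm (addr_ge0 M0 M0)) -sqrtr_sqr ler_wsqrtr //.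
move: hr hi; rewrite !ler_norml => /andP[r1 r2] /andP[i1 i2].
rewrite !expr2; nra.
Qed.

Definition climit U f (z : C) :=
  rlim U (fun m => complex.Re (f m)) (complex.Re z) /\ rlim U (fun m => complex.Im (f m)) (complex.Im z).

Definition ulim U f : C :=
  Complex (xget 0 (rlim U (fun m => complex.Re (f m)))) (xget 0 (rlim U (fun m => complex.Im (f m)))).

Definition bnd f := exists M : R, forall n, `|f n| <= (M%:C)%C.

Lemma ulim_eq U f z : isUF U -> climit U f z -> ulim U f = z.
Proof.
move=> hU [hr hi]; case: z hr hi => a b /= hr hi.
rewrite /ulim; congr (Complex _ _).
  by apply: rlim_uniq hU (xgetI 0 hr) hr.
by apply: rlim_uniq hU (xgetI 0 hi) hi.
Qed.

Lemma ulim_spec U f : isUF U -> bnd f -> climit U f (ulim U f).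
Proof.
move=> hU [M fM]; split => /=.
  apply: xgetPex; apply: (rlim_ex (M := M)) hU _ => m; exact: (normC_ReIm (fM m)).1.
apply: xgetPex; apply: (rlim_ex (M := M)) hU _ => m; exact: (normC_ReIm (fM m)).2.
Qed.

Lemma ulim_bnd U f M : isUF U -> (forall n, `|f n| <= (M%:C)%C) -> `|ulim U f| <= ((M + M)%:C)%C.
Proof.
move=> hU fM; have [hr hi] := ulim_spec hU (ex_intro _ M fM).
apply: normC_le.
  by apply: (rlim_bound hU hr) => m; exact: (normC_ReIm (fM m)).1.
by apply: (rlim_bound hU hi) => m; exact: (normC_ReIm (fM m)).2.
Qed.

End Cx.


Section Ops.
Variable R : realType.
Local Notation C := (R[i])%C.
Local Notation seqZ := (seqZ R).
Implicit Types (U : set (set int)) (f g : int -> C).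

Lemma rlim_eqf U (g h : int -> R) a : (forall m, g m = h m) -> rlim U g a -> rlim U h a.
Proof. by move=> e; have -> : g = h by apply/funext. Qed.

Section CL.
Context {U : set (set int)} (hU : isUF U).

Lemma climit_add f g a b : climit U f a -> climit U g b -> climit U (fun m => f m + g m) (a + b).
Proof.
move=> [fr fi] [gr gi]; split.
  by rewrite cReD; apply: rlim_eqf (rlim_add hU fr gr) => m; rewrite cReD.
by rewrite cImD; apply: rlim_eqf (rlim_add hU fi gi) => m; rewrite cImD.
Qed.

Lemma climit_mul f g a b : climit U f a -> climit U g b -> climit U (fun m => f m * g m) (a * b).
Proof.
move=> [fr fi] [gr gi]; split.
  rewrite cReM; apply: rlim_eqf (rlim_add hU (rlim_mul hU fr gr) (rlim_opp hU (rlim_mul hU fi gi))) => m.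
  by rewrite cReM.
rewrite cImM; apply: rlim_eqf (rlim_add hU (rlim_mul hU fr gi) (rlim_mul hU fi gr)) => m.
by rewrite cImM.
Qed.

Lemma climit_conj f a : climit U f a -> climit U (fun m => conjc (f m)) (conjc a).
Proof.
move=> [fr fi]; split.
  by rewrite cReJ; apply: rlim_eqf fr => m; rewrite cReJ.
by rewrite cImJ; apply: rlim_eqf (rlim_opp hU fi) => m; rewrite cImJ.
Qed.

Lemma climit_cst (c : C) : climit U (fun _ => c) c.
Proof. by split; exact: rlim_cst. Qed.
End CL.

Definition Pu U (v : seqZ) : seqZ := fun n => ulim U (fun m => v (n + m)).

Lemma bnd_bounded (v : seqZ) : bounded v -> bnd v. Proof. by []. Qed.

Lemma Pu_spec U (v : seqZ) n : isUF U -> bounded v -> climit U (fun m => v (n + m)) (Pu U v n).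
Proof. by move=> hU [M vM]; apply: ulim_spec => //; exists M => m; exact: vM. Qed.

Lemma Pu_bounded U (v : seqZ) : isUF U -> bounded v -> bounded (Pu U v).
Proof. by move=> hU [M vM]; exists (M + M) => n; apply: ulim_bnd => // m; exact: vM. Qed.

Lemma bounded_add (u v : seqZ) : bounded u -> bounded v -> bounded (sadd u v).
Proof.
move=> [M uM] [N vN]; exists (M + N) => n. rewrite /sadd.
apply: le_trans (ler_normD _ _) _; rewrite raddfD /=; exact: lerD.
Qed.

Lemma bounded_mul (u v : seqZ) : bounded u -> bounded v -> bounded (smul u v).
Proof.
move=> [M uM] [N vN]; exists (M * N) => n; rewrite /smul normrM rmorphM /=.
by apply: ler_pM => //; rewrite normr_ge0.
Qed.

Lemma bounded_scale a (v : seqZ) : bounded v -> bounded (sscale a v).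
Proof.
move=> [M vM]; exists (complex.Re `|a| * M) => n; rewrite /sscale normrM rmorphM /=.
have -> : ((complex.Re `|a|)%:C)%C = `|a|.
  by rewrite normc_def.
by apply: ler_pM => //; rewrite normr_ge0.
Qed.

Lemma bounded_star (v : seqZ) : bounded v -> bounded (sstar v).
Proof.
move=> [M vM]; exists M => n; rewrite /sstar.
by move: (vM n); case: (v n) => a b; rewrite !normc_def /= sqrrN.
Qed.

Lemma bounded_sum n (F : 'I_n -> seqZ) : (forall l, bounded (F l)) ->
  bounded (fun k => \sum_(l < n) F l k).
Proof.
elim: n F => [|n IH] F bF.
  by exists 0 => k; rewrite big_ord0 normr0.
have := bounded_add (IH (fun l => F (widen_ord (leqnSn n) l)) (fun l => bF _)) (bF ord_max).
by case=> M hM; exists M => k; rewrite big_ord_recr; exact: hM.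
Qed.

Lemma bounded_cst (c : C) : bounded (fun _ => c).
Proof. by exists (complex.Re `|c|) => n; rewrite normc_def. Qed.


Section PuAlg.
Context {U : set (set int)} (hU : isUF U).

Lemma Pu_add (u v : seqZ) : bounded u -> bounded v -> Pu U (sadd u v) = sadd (Pu U u) (Pu U v).
Proof.
move=> bu bv; apply/funext => n; rewrite /sadd; apply: ulim_eq hU _.
exact: (climit_add hU (Pu_spec n hU bu) (Pu_spec n hU bv)).
Qed.

Lemma Pu_mul (u v : seqZ) : bounded u -> bounded v -> Pu U (smul u v) = smul (Pu U u) (Pu U v).
Proof.
move=> bu bv; apply/funext => n; rewrite /smul; apply: ulim_eq hU _.
exact: (climit_mul hU (Pu_spec n hU bu) (Pu_spec n hU bv)).
Qed.

Lemma Pu_scale a (v : seqZ) : bounded v -> Pu U (sscale a v) = sscale a (Pu U v).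
Proof.
move=> bv; apply/funext => n; rewrite /sscale; apply: ulim_eq hU _.
exact: (climit_mul hU (climit_cst hU a) (Pu_spec n hU bv)).
Qed.

Lemma Pu_star (v : seqZ) : bounded v -> Pu U (sstar v) = sstar (Pu U v).
Proof.
move=> bv; apply/funext => n; rewrite /sstar; apply: ulim_eq hU _.
exact: (climit_conj hU (Pu_spec n hU bv)).
Qed.

Lemma Pu_cst (c : C) : Pu U (fun _ => c) = fun _ => c.
Proof. by apply/funext => n; apply: ulim_eq hU _; exact: climit_cst. Qed.

Lemma Pu_shift (v : seqZ) : Pu U (bshift v) = bshift (Pu U v).
Proof.
apply/funext => n; rewrite /Pu /bshift; congr ulim; apply/funext => m.
by rewrite addrAC.
Qed.

Lemma Pu_sum n (F : 'I_n -> seqZ) : (forall l, bounded (F l)) ->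
  Pu U (fun k => \sum_(l < n) F l k) = fun k => \sum_(l < n) Pu U (F l) k.
Proof.
move=> bF; apply/funext => k; apply: ulim_eq hU _.
elim: n F bF => [|n IH] F bF.
  under eq_fun do rewrite big_ord0; rewrite big_ord0; exact: (climit_cst hU 0).
under eq_fun do rewrite big_ord_recr /=; rewrite big_ord_recr /=.
apply: (climit_add hU); first by apply: IH => l.
exact: (Pu_spec k hU (bF _)).
Qed.

End PuAlg.

Lemma Pu_comp p q (v : seqZ) : isUF p -> isUF q -> bounded v ->
  Pu p (Pu q v) = Pu (usum p q) v.
Proof.
move=> hp hq bv; apply/funext => n.
have hpq := usum_UF hp hq.
have bq := Pu_bounded hq bv.
have [r1 i1] := Pu_spec n hp bq.
symmetry; apply: ulim_eq hpq _; split.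
  apply: (rlim_comp hp hq (h := fun m => complex.Re (Pu q v (n + m)))) => // m.
  have [r _] := Pu_spec (n + m) hq bv.
  by apply: rlim_eqf r => k; rewrite addrA.
apply: (rlim_comp hp hq (h := fun m => complex.Im (Pu q v (n + m)))) => // m.
have [_ r] := Pu_spec (n + m) hq bv.
by apply: rlim_eqf r => k; rewrite addrA.
Qed.

End Ops.


Section Gram.
Local Open Scope sesquilinear_scope.
Variable C : numClosedFieldType.

Lemma gram_aux m n (K : 'M[C]_n) (S : 'M[C]_(n, m)) : S *m S ^t* = 1%:M ->
  ((K *m S)^T) ^t* *m (K *m S)^T = (K^T) ^t* *m K^T.
Proof.
move=> uS; rewrite !trmxK map_mxM trmx_mul -!mulmxA; congr (_ *m _).
rewrite mulmxA.
have -> : (S ^ Num.Def.conjC)%sesqui *m S^T = 1%:M.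
  have := congr1 trmx uS; rewrite trmx_mul trmx1 map_trmx trmxK; exact.
by rewrite mul1mx.
Qed.

Lemma gram2 n (X Y : 'M[C]_n) : exists Z : 'M[C]_n, Z ^t* *m Z = X ^t* *m X + Y ^t* *m Y.
Proof.
pose W : 'M[C]_(n + n, n) := col_mx X Y.
pose S := schmidt (W^T).
have uS : S *m S ^t* = 1%:M.
  by apply/unitarymxP; apply: schmidt_unitarymx; rewrite leq_addr.
pose K := W^T *m pinvmx S.
have eW : K *m S = W^T by apply: mulmxKpV; exact: schmidt_sub.
exists K^T.
have -> : X ^t* *m X + Y ^t* *m Y = W ^t* *m W.
  by rewrite /W tr_col_mx map_row_mx mul_row_col.
have -> : W = (K *m S)^T by rewrite eW trmxK.
exact: (esym (gram_aux K uS)).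
Qed.
End Gram.


Section Main.
Variable R : realType.
Local Notation C := (R[i])%C.
Local Notation seqZ := (seqZ R).

Lemma conjc_mul_self (z : C) : conjc z * z = ((complex.Re z ^+ 2 + complex.Im z ^+ 2)%:C)%C.
Proof.
case: z => a b; apply/eqP; rewrite eq_complex /=; apply/andP; split; apply/eqP; ring.
Qed.

Lemma cp_step (n : nat) (X Y : 'I_n -> 'I_n -> C) : exists Z : 'I_n -> 'I_n -> C,
  forall i j, \sum_(l < n) conjc (Z l i) * Z l j =
    (\sum_(l < n) conjc (X l i) * X l j + \sum_(l < n) conjc (Y l i) * Y l j) / 2.
Proof.
pose c : C := ((Num.sqrt (2^-1 : R))%:C)%C.
have cc : conjc c * c = 2^-1.
  rewrite conjc_real -rmorphM /= -expr2 sqr_sqrtr ?invr_ge0 ?ler0n //.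
  by rewrite rmorphV ?unitfE ?pnatr_eq0 //= rmorph_nat.
pose Xm : 'M[C]_n := \matrix_(l, j) (c * X l j).
pose Ym : 'M[C]_n := \matrix_(l, j) (c * Y l j).
have [Zm eZ] := gram2 Xm Ym.
exists (fun l j => Zm l j) => i j.
Local Open Scope sesquilinear_scope.
transitivity ((Zm ^t* *m Zm) i j).
  by rewrite !mxE; apply: eq_bigr => l _; rewrite !mxE.
rewrite eZ !mxE mulrDl !mulr_suml; congr (_ + _); apply: eq_bigr => l _; rewrite !mxE.
  rewrite rmorphM /= -cc; ring.
rewrite rmorphM /= -cc; ring.
Qed.


Section PhiSec.
Variables (p q : set (set int)).
Hypotheses (hp : isUF p) (hq : isUF q).
Hypotheses (pp : usum p p = p) (qq : usum q q = q) (pq : usum p q = p) (qp : usum q p = q).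

Definition Phi (v : seqZ) : seqZ := sscale (2^-1) (sadd (Pu p v) (Pu q v)).

Lemma Phi_bounded v : bounded v -> bounded (Phi v).
Proof. by move=> bv; apply: bounded_scale; apply: bounded_add; exact: Pu_bounded. Qed.

Lemma Phi_linear : is_linear_linf Phi.
Proof.
move=> a u v bu bv; have bau := bounded_scale a bu.
rewrite /Phi !Pu_add // !Pu_scale //; apply/funext => n; rewrite /sscale /sadd; ring.
Qed.

Lemma Phi_unital : is_unital Phi.
Proof.
rewrite /is_unital /Phi /sone !Pu_cst //; apply/funext => n; rewrite /sscale /sadd.
by field.
Qed.

Lemma Pu_Phi_p v : bounded v -> Pu p (Phi v) = Pu p v.
Proof.
move=> bv; have bp := Pu_bounded hp bv; have bq := Pu_bounded hq bv.
rewrite /Phi Pu_scale //; last exact: bounded_add.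
rewrite Pu_add // !Pu_comp // pp pq; apply/funext => n; rewrite /sscale /sadd.
by field.
Qed.

Lemma Pu_Phi_q v : bounded v -> Pu q (Phi v) = Pu q v.
Proof.
move=> bv; have bp := Pu_bounded hp bv; have bq := Pu_bounded hq bv.
rewrite /Phi Pu_scale //; last exact: bounded_add.
rewrite Pu_add // !Pu_comp // qq qp; apply/funext => n; rewrite /sscale /sadd.
by field.
Qed.

Lemma Phi_idem : is_idempotent Phi.
Proof. by move=> v bv; rewrite {1}/Phi Pu_Phi_p // Pu_Phi_q. Qed.

Lemma Phi_equiv : is_Z_equivariant Phi.
Proof. by move=> v bv; rewrite /Phi !Pu_shift. Qed.


Lemma Pu_gram U n (B : 'I_n -> 'I_n -> seqZ) i j k : isUF U -> (forall i j, bounded (B i j)) ->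
  Pu U (fun k => \sum_(l < n) conjc (B l i k) * B l j k) k =
  \sum_(l < n) conjc (Pu U (B l i) k) * Pu U (B l j) k.
Proof.
move=> hU bB.
have -> : (fun k => \sum_(l < n) conjc (B l i k) * B l j k) =
          (fun k => \sum_(l < n) smul (sstar (B l i)) (B l j) k) by [].
rewrite Pu_sum //; last by move=> l; apply: bounded_mul; [apply: bounded_star|]; exact: bB.
apply: eq_bigr => l _.
have b1 : bounded (sstar (B l i)) by apply: bounded_star; exact: bB.
have b2 := bB l j; have b3 := bB l i.
by rewrite Pu_mul // Pu_star.
Qed.

Lemma Phi_CP : is_completely_positive Phi.
Proof.
move=> n A [B [bB eA]].
have eAf i j : A i j = fun k => \sum_(l < n) conjc (B l i k) * B l j k.
  by apply/funext => k; rewrite eA.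
have bA i j : bounded (A i j).
  rewrite eAf; apply: (bounded_sum (F := fun l => smul (sstar (B l i)) (B l j))) => l.
  by apply: bounded_mul; [apply: bounded_star|]; exact: bB.
have PhiA i j k : Phi (A i j) k =
   (\sum_(l < n) conjc (Pu p (B l i) k) * Pu p (B l j) k +
    \sum_(l < n) conjc (Pu q (B l i) k) * Pu q (B l j) k) / 2.
  by rewrite /Phi /sscale /sadd eAf !Pu_gram // mulrC.
have : forall k : int, exists Z : 'I_n -> 'I_n -> C, forall i j,
    \sum_(l < n) conjc (Z l i) * Z l j = Phi (A i j) k.
  move=> k; have [Z hZ] := cp_step (fun l j => Pu p (B l j) k) (fun l j => Pu q (B l j) k).
  by exists Z => i j; rewrite hZ PhiA.
move=> /choice [Zf hZf].
exists (fun l j k => Zf k l j); split; last by move=> i j k; rewrite hZf.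
move=> l j; have [M hM] := Phi_bounded (bA j j); exists (1 + M) => k.
have hk := hM k; rewrite -hZf in hk.
pose s := \sum_(i < n) (complex.Re (Zf k i j) ^+ 2 + complex.Im (Zf k i j) ^+ 2).
have es : \sum_(l0 < n) conjc (Zf k l0 j) * Zf k l0 j = (s%:C)%C.
  by rewrite /s rmorph_sum; apply: eq_bigr => i _; rewrite conjc_mul_self.
rewrite es in hk.
have s0 : 0 <= s by apply: sumr_ge0 => i _; rewrite addr_ge0 // sqr_ge0.
have zs : complex.Re (Zf k l j) ^+ 2 + complex.Im (Zf k l j) ^+ 2 <= s.
  rewrite /s (bigD1 l) //= lerDl.
  by apply: sumr_ge0 => i _; rewrite addr_ge0 // sqr_ge0.
move: hk; rewrite normc_def /= expr0n /= addr0 sqrtr_sqr lecR ger0_norm // => sM.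
rewrite normc_def lecR.
move: zs; set t := complex.Re _ ^+ 2 + _ => zs.
have t0 : 0 <= t by rewrite addr_ge0 // sqr_ge0.
have st := sqr_sqrtr t0; have sg := sqrtr_ge0 t.
move: st sg; move: (Num.sqrt t) => r; rewrite expr2 => st sg.
nra.
Qed.


Hypotheses (pA : p (Ab 0)) (qA : q (Ab 1)).

Definition vA : seqZ := fun n => if `[< Ab 0 n >] then 1 else 0.

Lemma vA_bounded : bounded vA.
Proof.
exists 1 => n; rewrite /vA; case: asboolP => _.
  by rewrite normr1 rmorph1.
by rewrite normr0 rmorph1 ler01.
Qed.

Lemma Pu_vA_p : Pu p vA 0 = 1.
Proof.
apply: ulim_eq hp _; split.
  by apply: (rlim_set hp (A := Ab 0)) => // m Am; rewrite add0r /vA asboolT.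
by apply: (rlim_set hp (A := Ab 0)) => // m Am; rewrite add0r /vA asboolT.
Qed.

Lemma Pu_vA_q : Pu q vA 0 = 0.
Proof.
have nA m : Ab 1 m -> vA (0 + m) = 0.
  by move=> Am; rewrite add0r /vA asboolF // => A0m; exact: A01_disj A0m Am.
apply: ulim_eq hq _; split.
  by apply: (rlim_set hq (A := Ab 1)) => // m /nA ->.
by apply: (rlim_set hq (A := Ab 1)) => // m /nA ->.
Qed.

Lemma Phi_not_Cstar : ~ is_Cstar_subalgebra (range_linf Phi).
Proof.
move=> [_ [_ [_ [_ [Hmul _]]]]].
have bv := vA_bounded.
have rw : range_linf Phi (Phi vA) by exists vA.
have [u [bu e]] := Hmul _ _ rw rw.
have e2 := Phi_idem bu; rewrite -e in e2.
have bw := Phi_bounded bv.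
have pw := Pu_Phi_p bv; have qw := Pu_Phi_q bv.
have w0 : Phi vA 0 = 2^-1 by rewrite /Phi /sscale /sadd Pu_vA_p Pu_vA_q addr0 mulr1.
move: e2 pw qw bw w0; move: (Phi vA) => w e2 pw qw bw w0.
have := congr1 (fun f => f 0) e2.
rewrite /Phi /sscale /sadd (Pu_mul hp bw bw) (Pu_mul hq bw bw) pw qw.
rewrite /smul w0 Pu_vA_p Pu_vA_q !mulr0 !addr0 !mulr1 => h.
have h2 : (2 : C)^-1 != 0 by rewrite invr_eq0 pnatr_eq0.
have h1 : (2 : C)^-1 = 1.
  by apply: (mulfI h2); rewrite mulr1 -h.
by move: h1; move/(congr1 (fun x : C => x^-1)); rewrite invrK invr1 => /eqP; rewrite pnatr_eq1.
Qed.

Lemma Phi_all : [/\ maps_linf Phi, is_linear_linf Phi, is_unital Phi,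
    is_completely_positive Phi & [/\ is_idempotent Phi, is_Z_equivariant Phi &
    ~ is_Cstar_subalgebra (range_linf Phi)]].
Proof.
split.
- by move=> v bv; exact: Phi_bounded.
- exact: Phi_linear.
- exact: Phi_unital.
- exact: Phi_CP.
- split; [exact: Phi_idem|exact: Phi_equiv|exact: Phi_not_Cstar].
Qed.

End PhiSec.

End Main.

Theorem theorem2p15 (R : realType) :
  exists Phi : seqZ R -> seqZ R,
    maps_linf Phi /\ is_linear_linf Phi /\ is_unital Phi /\
    is_completely_positive Phi /\ is_idempotent Phi /\
    is_Z_equivariant Phi /\
    ~ is_Cstar_subalgebra (range_linf Phi).
Proof.
have [p [q [hp hq pA qA [pp qq pq qp]]]] := exists_pair.
exists (@Phi R p q).
have [h1 h2 h3 h4 [h5 h6 h7]] := @Phi_all R p q hp hq pp qq pq qp pA qA.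
by do !split.
Qed.
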